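(* Let $N,\alpha\in\mathbb{N}$ and let $a_1,\dots,a_\alpha$ be complex numbers. Define $a_{n,j}:=a_j$ if $n\le N$ and $j\le\alpha$, and $a_{n,j}:=0$ otherwise ($n,j\ge1$). Then $$(1+a_1+\cdots+a_\alpha)^N=1+\sum_{k=1}^{\alpha N}\ \sum_{L\vdash k}\frac{1}{C_{stb}(L)}\sum_{\sigma\in S_{\ell(L)}}\operatorname{sign}(\sigma)\,\mathbb{A}_{\sigma,L}\big(\{a_{n,j}\}_{n,j\ge1}\big).$$
   Context: $L\vdash k$ means $L=[x_1,\dots,x_m]$ is a partition of $k$ (multiset of positive integers summing to $k$), $\ell(L)=m$, and $C_{stb}(L):=\prod_x(\#\{i:x_i=x\})!$ over distinct values $x$ in $L$. Writing $L=[k_1,\dots,k_m]$ with $k_1\le\cdots\le k_m$ and, for $\sigma\in S_m$ (sign denoted $\operatorname{sign}$), decomposing $\sigma$ into disjoint cycles $C_1,\dots,C_r$ (fixed points kept as length-one cycles), $\mathbb{A}_{\sigma,L}(\{a_{n,j}\}):=\prod_{t=1}^{r}\big(\sum_{n=1}^{\infty}\prod_{i\in C_t}a_{n,k_i}\big)$ (finite sums here). *)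

(* Defs.v *)
From HB Require Import structures.
From mathcomp Require Import all_boot all_order all_algebra all_fingroup.
From mathcomp Require Import complex.
From mathcomp Require Import reals.
Set Implicit Arguments. Unset Strict Implicit. Unset Printing Implicit Defensive.
Import Order.TTheory GRing.Theory Num.Theory.
Local Open Scope ring_scope.

Definition is_partition (k : nat) (L : seq nat) : bool :=
  [&& sorted leq L, all (fun x => 0 < x)%N L & sumn L == k].

Definition Cstb (L : seq nat) : nat :=
  \prod_(x <- undup L) (count_mem x L)`!.

(* A_{sigma,L}({a_{n,j}}) = prod over cycles C of sigma (fixed points included)
   of sum_{n >= 1} prod_{i in C} a_{n,k_i}; the sum over n is taken over
   1 <= n <= M, where M is a bound beyond which a_{n,_} vanishes. *)
Definition Aop (C : nzRingType) (M : nat) (a : nat -> nat -> C) (m : nat)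
    (s : 'S_m) (L : m.-tuple nat) : C :=
  \prod_(c in porbits s) \sum_(1 <= n < M.+1) \prod_(i in c) a n (tnth L i).

Definition anj (C : nzRingType) (N alpha : nat) (a : nat -> C) (n j : nat) : C :=
  if [&& (1 <= n)%N, (n <= N)%N, (1 <= j)%N & (j <= alpha)%N] then a j else 0.

(* Main.v *)
Require Import Defs.
From HB Require Import structures.
From mathcomp Require Import all_boot all_order all_algebra all_fingroup.
From mathcomp Require Import complex.
From mathcomp Require Import reals.
From mathcomp Require Import ring.
Import Order.TTheory GRing.Theory Num.Theory.
Local Open Scope ring_scope.

Module Helpers.
Set Implicit Arguments. Unset Strict Implicit. Unset Printing Implicit Defensive.

Lemma fixed_porbit m T (s : 'S_m) (f : 'I_m -> T) :
  (forall i, f (s i) = f i) -> forall x y, y \in porbit s x -> f y = f x.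
Proof.
move=> fs x y /porbitP[i ->]; elim: i => [|i IH]; first by rewrite expg0 perm1.
by rewrite expgSr permM fs.
Qed.

Lemma card_fixed m N (s : 'S_m) :
  #|[set f : {ffun 'I_m -> 'I_N.+1} | [forall i, f (s i) == f i]]| = (N.+1 ^ #|porbits s|)%N.
Proof.
pose psi (g : {ffun {set 'I_m} -> 'I_N.+1}) := [ffun i => g (porbit s i)].
have -> : (N.+1 ^ #|porbits s|)%N = #|pffun_on ord0 (porbits s) (@predT 'I_N.+1)|.
  by rewrite card_pffun_on card_ord.
rewrite -(card_in_imset (f:=psi)).
- apply: eq_card => f; rewrite inE; apply/forallP/imsetP.
  + move=> fs.
    exists [ffun c => if c \in porbits s then
              (if [pick x in c] is Some x then f x else ord0) else ord0].
    * apply/pffun_onP; split => //.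
      apply/subsetP => c; rewrite inE ffunE.
      by case: ifP => // _; rewrite eqxx.
    * apply/ffunP => i; rewrite !ffunE imset_f //; symmetry.
      case: pickP => [y yin | /(_ i)]; last by rewrite porbit_id.
      exact: (fixed_porbit (fun j => eqP (fs j))).
  + move=> [g _ ->] i; rewrite !ffunE.
    by have := porbit_perm s 1 i; rewrite expg1 => ->.
- move=> g1 g2 /pffun_onP[sub1 _] /pffun_onP[sub2 _] eq.
  apply/ffunP => c.
  case: (boolP (c \in porbits s)) => [/imsetP[x _ ->] | nc].
  + by move/ffunP: eq => /(_ x); rewrite !ffunE.
  + have h1 : g1 c = ord0.
      by apply/eqP; apply: contraNT nc => H; apply: (subsetP sub1); rewrite inE.
    have h2 : g2 c = ord0.
      by apply/eqP; apply: contraNT nc => H; apply: (subsetP sub2); rewrite inE.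
    by rewrite h1 h2.
Qed.

Lemma prod_bool (R : comPzSemiRingType) (I : finType) (P : pred I) :
  \prod_(i : I) ((P i)%:R : R) = ([forall i, P i])%:R.
Proof.
case: (boolP [forall i, P i]) => [/forallP H | /forallPn [i Hi]].
  by apply: big1 => i _; rewrite H.
by rewrite (bigD1 i) //= (negbTE Hi) mul0r.
Qed.

Lemma natr_fixed (R : comNzRingType) m N (s : 'S_m) :
  (N.+1)%:R ^+ #|porbits s| =
  \sum_(f : {ffun 'I_m -> 'I_N.+1}) \prod_i ((f i == f (s i))%:R : R).
Proof.
rewrite -natrX -card_fixed.
under eq_bigr do rewrite prod_bool.
rewrite -sum1_card natr_sum big_mkcond /=.
apply: eq_bigr => f _; rewrite inE.
have -> : [forall i, f i == f (s i)] = [forall i, f (s i) == f i].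
  by apply: eq_forallb => i; rewrite eq_sym.
by case: [forall _, _].
Qed.

Lemma sign_sum (R : comNzRingType) m N :
  \sum_(s : 'S_m) (-1) ^+ s * ((N.+1)%:R ^+ #|porbits s|) = ((N.+1) ^_ m)%:R :> R.
Proof.
under eq_bigr do rewrite natr_fixed mulr_sumr.
rewrite exchange_big /=.
transitivity (\sum_(f : {ffun 'I_m -> 'I_N.+1}) ((injectiveb f)%:R : R)).
  apply: eq_bigr => f _.
  have -> : \sum_(s : 'S_m) (-1) ^+ s * \prod_i ((f i == f (s i))%:R : R)
      = \det (\matrix_(i, j) ((f i == f j)%:R : R)).
    rewrite /determinant; apply: eq_bigr => s _; congr (_ * _).
    by apply: eq_bigr => i _; rewrite mxE.
  have [inj|ninj] := boolP (injectiveb f).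
  - have inj' := injectiveP _ inj.
    have -> : (\matrix_(i, j) ((f i == f j)%:R : R)) = 1%:M.
      by apply/matrixP => i j; rewrite !mxE (inj_eq inj').
    by rewrite det1.
  - have [x [y nxy fxy]] := injectivePn _ ninj.
    by rewrite (determinant_alternate nxy) // => j; rewrite !mxE fxy.
have := card_inj_ffuns 'I_m 'I_N.+1; rewrite !card_ord => <-.
rewrite -sum1_card natr_sum [RHS]big_mkcond /=.
by apply: eq_bigr => f _; rewrite inE; case: injectiveb.
Qed.

Lemma prod_porbits (R : comNzRingType) m (s : 'S_m) (F : 'I_m -> R) :
  \prod_(c in porbits s) \prod_(i in c) F i = \prod_i F i.
Proof.
rewrite [RHS](partition_big (porbit s) (mem (porbits s))) /=; last first.
  by move=> i _; apply: imset_f.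
apply: eq_bigr => c /imsetP[x _ ->]; apply: eq_bigl => i.
by rewrite eq_porbit_mem.
Qed.

Definition bfun (C : nzRingType) alpha (a : nat -> C) (j : nat) : C :=
  if (1 <= j <= alpha)%N then a j else 0.

Lemma Aop_eq (C : comNzRingType) N alpha (a : nat -> C) m (s : 'S_m) (L : m.-tuple nat) :
  Aop N (anj N alpha a) s L =
  (N%:R ^+ #|porbits s|) * \prod_(i < m) bfun alpha a (tnth L i).
Proof.
rewrite /Aop.
have inner (c : {set 'I_m}) : \sum_(1 <= n < N.+1) \prod_(i in c) anj N alpha a n (tnth L i)
    = N%:R * \prod_(i in c) bfun alpha a (tnth L i).
  transitivity (\sum_(1 <= n < N.+1) \prod_(i in c) bfun alpha a (tnth L i)).
    rewrite big_nat_cond [RHS]big_nat_cond.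
    apply: eq_bigr => n /andP[/andP[n1 nN] _]; apply: eq_bigr => i _.
    have nN' : (n <= N)%N by rewrite -ltnS.
    by rewrite /anj /bfun n1 nN'.
  by rewrite sumr_const_nat subn1 /= mulr_natl.
under eq_bigr do rewrite inner.
by rewrite big_split /= prodr_const prod_porbits.
Qed.

Definition gof n N (mu : n.-tuple 'I_N.+1) (j : nat) : nat := nth 0%N (map val mu) j.
Definition sz n N (mu : n.-tuple 'I_N.+1) : nat := (\sum_(j < n) gof mu j)%N.
Definition Wt (R : numFieldType) N n (c : nat -> R) (x : R) (mu : n.-tuple 'I_N.+1) : R :=
  (N ^_ sz mu)%:R / (\prod_(j < n) (gof mu j)`!)%:R * x ^+ (N - sz mu)
  * \prod_(j < n) c j ^+ gof mu j.

Lemma ffactD n p q : n ^_ (p + q) = (n ^_ p * (n - p) ^_ q)%N.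
Proof.
elim: q => [|q IH]; first by rewrite addn0 ffactn0 muln1.
by rewrite addnS !ffactnSr IH subnDA mulnA.
Qed.

Lemma sum_tupleS (V : nmodType) (T : finType) n (F : n.+1.-tuple T -> V) :
  \sum_(t : n.+1.-tuple T) F t = \sum_(x : T) \sum_(t : n.-tuple T) F [tuple of x :: t].
Proof.
rewrite pair_bigA /=.
rewrite (reindex (fun p : T * n.-tuple T => [tuple of p.1 :: p.2])) //=.
exists (fun t => (thead t, [tuple of behead t])) => [[x t] _ | t _] /=.
  by congr pair; apply: val_inj.
by rewrite -tuple_eta.
Qed.

Lemma gof_cons n N (i : 'I_N.+1) (mu : n.-tuple 'I_N.+1) j :
  gof [tuple of i :: mu] j = if j is j'.+1 then gof mu j' else val i.
Proof. by case: j. Qed.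

Lemma sz_cons n N (i : 'I_N.+1) (mu : n.-tuple 'I_N.+1) :
  sz [tuple of i :: mu] = (i + sz mu)%N.
Proof. by rewrite /sz big_ord_recl. Qed.

Lemma prod_cons_fact n N (i : 'I_N.+1) (mu : n.-tuple 'I_N.+1) :
  (\prod_(j < n.+1) (gof [tuple of i :: mu] j)`!)%N = (i`! * \prod_(j < n) (gof mu j)`!)%N.
Proof. by rewrite big_ord_recl; congr (_ * _)%N; apply: eq_bigr => j _; rewrite lift0. Qed.

Lemma prod_cons_c (R : comNzRingType) n N (i : 'I_N.+1) (mu : n.-tuple 'I_N.+1) (c : nat -> R) :
  \prod_(j < n.+1) c j ^+ gof [tuple of i :: mu] j = c 0%N ^+ i * \prod_(j < n) c j.+1 ^+ gof mu j.
Proof. by rewrite big_ord_recl; congr (_ * _); apply: eq_bigr => j _; rewrite lift0. Qed.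

Lemma term_id (R : numFieldType) N m i (P : nat) (x c0 Q : R) : (0 < P)%N ->
  (if (i < (N - m).+1)%N then (N ^_ m)%:R / P%:R *
    (x ^+ (N - m - i) * c0 ^+ i *+ 'C(N - m, i)) * Q else 0)
  = (N ^_ (i + m))%:R / (i`! * P)%:R * x ^+ (N - (i + m)) * (c0 ^+ i * Q).
Proof.
move=> P0; rewrite addnC ffactD.
case: ifP => hi.
- rewrite -(bin_ffact (N - m) i) subnDA -[_ *+ 'C(_, _)]mulr_natr !natrM.
  have hP : (P%:R : R) != 0 by rewrite pnatr_eq0 -lt0n.
  have hI : ((i`!)%:R : R) != 0 by rewrite pnatr_eq0 -lt0n fact_gt0.
  field.
  by rewrite hI hP.
- rewrite ltnS leqNgt in hi; move/negbFE: hi => hi.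
  by rewrite (ffact_small hi) muln0 !mul0r.
Qed.

Lemma multinomial (R : numFieldType) N n (c : nat -> R) x :
  (x + \sum_(j < n) c j) ^+ N = \sum_(mu : n.-tuple 'I_N.+1) Wt c x mu.
Proof.
elim: n c x => [|n IH] c x.
  rewrite big_ord0 addr0 (big_pred1 [tuple]) => [|t]; last by apply/esym/eqP; exact: tuple0.
  by rewrite /Wt /sz !big_ord0 ffactn0 subn0 invr1 mulr1 mul1r mulr1.
rewrite big_ord_recl addrA.
under eq_bigr do rewrite lift0.
rewrite (IH (fun j => c j.+1) (x + c 0%N)) sum_tupleS exchange_big /=.
apply: eq_bigr => mu _.
rewrite /Wt exprDn (@big_ord_widen _ _ _ (N - sz mu).+1 N.+1 (fun i => x ^+ (N - sz mu - i) * c 0%N ^+ i *+ 'C(N - sz mu, i))) ?ltnS ?leq_subr // /=.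
rewrite mulr_sumr mulr_suml big_mkcond /=.
apply: eq_bigr => i _.
rewrite sz_cons prod_cons_fact prod_cons_c.
rewrite -term_id //; last by rewrite prodn_gt0 // => j; rewrite fact_gt0.
Qed.

Definition Lof (g : nat -> nat) (n : nat) : seq nat :=
  flatten [seq nseq (g j) j.+1 | j <- iota 0 n].

Lemma iter_mul (R : pzSemiRingType) (y : R) c : iter c (GRing.mul y) 1 = y ^+ c.
Proof. by elim: c => [|c IH] //=; rewrite IH exprS. Qed.

Lemma iter_add y c : iter c (addn y) 0%N = (c * y)%N.
Proof. by elim: c => [|c IH] //=; rewrite IH mulSn. Qed.

Lemma big_iota0 (R : Type) (idx : R) (op : Monoid.law idx) n (F : nat -> R) :
  \big[op/idx]_(j <- iota 0 n) F j = \big[op/idx]_(j < n) F j.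
Proof. by rewrite -(big_mkord xpredT) /index_iota subn0. Qed.

Lemma size_Lof g n : size (Lof g n) = (\sum_(j < n) g j)%N.
Proof.
rewrite size_flatten /shape -map_comp sumnE big_map big_iota0.
by apply: eq_bigr => j _; rewrite /= size_nseq.
Qed.

Lemma sumn_Lof g n : sumn (Lof g n) = (\sum_(j < n) g j * j.+1)%N.
Proof.
rewrite sumnE big_flatten big_map big_iota0.
by apply: eq_bigr => j _; rewrite big_nseq iter_add.
Qed.

Lemma prod_Lof (R : comNzRingType) (F : nat -> R) g n :
  \prod_(x <- Lof g n) F x = \prod_(j < n) F j.+1 ^+ g j.
Proof.
rewrite big_flatten big_map big_iota0.
by apply: eq_bigr => j _; rewrite big_nseq iter_mul.
Qed.

Lemma mem_Lof g n x : x \in Lof g n -> (0 < x <= n)%N.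
Proof.
move/flattenP => [s /mapP [j jin ->] xin].
rewrite mem_iota add0n in jin.
by move/nseqP: xin => [-> _].
Qed.

Lemma sorted_nseq_cat c y (s : seq nat) :
  all (leq y) s -> sorted leq s -> sorted leq (nseq c y ++ s).
Proof.
move=> hall hs; elim: c => [|c IH] //=.
rewrite (path_sortedE leq_trans) IH andbT all_cat hall andbT.
by apply/allP => z /nseqP [-> _].
Qed.

Lemma sorted_Lofi g i n : sorted leq (flatten [seq nseq (g j) j.+1 | j <- iota i n]).
Proof.
elim: n i => [|n IH] i //=.
apply: sorted_nseq_cat => //.
apply/allP => x /flattenP [s /mapP [j jin ->] xin].
rewrite mem_iota in jin; move/nseqP: xin => [-> _].
by case/andP: jin => h _; apply: leqW.
Qed.

Lemma sorted_Lof g n : sorted leq (Lof g n).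
Proof. exact: sorted_Lofi. Qed.

Lemma count_Lof g n j : (j < n)%N -> count_mem j.+1 (Lof g n) = g j.
Proof.
move=> jn; rewrite count_flatten -map_comp sumnE big_map.
rewrite (bigD1_seq j) ?mem_iota ?iota_uniq //= count_nseq /= eqxx mul1n.
rewrite big1 ?addn0 // => k /negbTE kj.
by rewrite count_nseq /= eqSS kj.
Qed.

Lemma count_Lof_out g n x : ~~ (0 < x <= n)%N -> count_mem x (Lof g n) = 0%N.
Proof.
move=> hx; apply/count_memPn; apply: contra hx; exact: mem_Lof.
Qed.

Lemma Lof_count g n (L : seq nat) :
  sorted leq L -> all (fun x => 0 < x <= n)%N L ->
  (forall j, (j < n)%N -> g j = count_mem j.+1 L) -> Lof g n = L.
Proof.
move=> sL aL hg.
apply: (sorted_eq leq_trans anti_leq) => //; first exact: sorted_Lof.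
rewrite /perm_eq; apply/allP => x _; apply/eqP.
have [hx | hx] := boolP (0 < x <= n)%N.
  case/andP: hx => x0 xn.
  rewrite -(prednK x0) count_Lof ?hg //; first by rewrite prednK.
  by rewrite -ltnS prednK.
rewrite count_Lof_out //; symmetry; apply/count_memPn.
by apply: contra hx => xL; apply: (allP aL).
Qed.

Lemma Cstb_Lof g n : Cstb (Lof g n) = (\prod_(j < n) (g j)`!)%N.
Proof.
rewrite /Cstb; set L := Lof g n.
transitivity (\prod_(x <- iota 1 n | x \in L) (count_mem x L)`!)%N.
  rewrite -[RHS]big_filter; apply: perm_big; apply: uniq_perm.
  - exact: undup_uniq.
  - by rewrite filter_uniq // iota_uniq.
  - move=> x; rewrite mem_undup mem_filter mem_iota.
    case xL: (x \in L) => //=.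
    by have := mem_Lof xL; rewrite add1n ltnS.
rewrite big_mkcond /=.
rewrite (iotaDl 1 0) big_map big_iota0.
apply: eq_bigr => j _; rewrite add1n count_Lof //.
case: ifP => // /negbT /count_memPn.
by rewrite /L count_Lof // => ->.
Qed.

Lemma mem_le_sumn (s : seq nat) x : x \in s -> (x <= sumn s)%N.
Proof.
elim: s => [|y s IH] //=; rewrite inE => /orP [/eqP -> | /IH h].
  exact: leq_addr.
by apply: leq_trans h _; apply: leq_addl.
Qed.

Definition kof n N (mu : n.-tuple 'I_N.+1) : nat := (\sum_(j < n) gof mu j * j.+1)%N.

Definition wL (C : numFieldType) N alpha (a : nat -> C) (L : seq nat) : C :=
  ((Cstb L)%:R)^-1 * ((N ^_ size L)%:R * \prod_(x <- L) bfun alpha a x).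

Lemma term_eq (C : numFieldType) N alpha (a : nat -> C) k m (t : m.-tuple 'I_k.+1) :
  ((Cstb (map val t))%:R)^-1 *
  \sum_(s : 'S_m) (-1) ^+ odd_perm s * Aop N.+1 (anj N.+1 alpha a) s [tuple of map val t]
  = wL N.+1 alpha a (map val t).
Proof.
rewrite /wL; congr (_ * _); rewrite [in RHS]size_map [in RHS]size_tuple.
rewrite (eq_bigr (fun s : 'S_m => (-1) ^+ s * ((N.+1)%:R ^+ #|porbits s|) *
   \prod_(i < m) bfun alpha a (tnth [tuple of map val t] i))); last first.
  by move=> s _; rewrite Aop_eq mulrA.
rewrite -mulr_suml sign_sum; congr (_ * _).
by symmetry; exact: (big_tuple _ _ [tuple of map val t] xpredT (bfun alpha a)).
Qed.

Lemma gof_tnth n N (mu : n.-tuple 'I_N.+1) (j : 'I_n) : gof mu j = tnth mu j.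
Proof. by rewrite /gof (nth_map ord0) ?size_tuple // -(tnth_nth ord0). Qed.

Lemma map_val_mktuple_inord k m (L : seq nat) : size L = m -> all (fun x => x <= k)%N L ->
  map val [tuple (inord (nth 0%N L i) : 'I_k.+1) | i < m] = L.
Proof.
move=> sL aL; apply: (@eq_from_nth _ 0%N); rewrite size_map size_tuple // => i im.
rewrite (nth_map ord0) ?size_tuple //.
have -> : nth ord0 [tuple (inord (nth 0%N L i) : 'I_k.+1) | i < m] i
    = tnth [tuple (inord (nth 0%N L i) : 'I_k.+1) | i < m] (Ordinal im).
  by rewrite (tnth_nth ord0).
rewrite tnth_mktuple /= inordK // ltnS; apply: (allP aL); apply: mem_nth; by rewrite sL.
Qed.

Lemma match_km (C : numFieldType) N alpha (a : nat -> C) k m : (0 < m)%N ->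
  \sum_(t : m.-tuple 'I_k.+1 | is_partition k (map val t))
     ((Cstb (map val t))%:R)^-1 *
     \sum_(s : 'S_m) (-1) ^+ odd_perm s * Aop N.+1 (anj N.+1 alpha a) s [tuple of map val t]
  = \sum_(mu : alpha.-tuple 'I_N.+2 | [&& sz mu == m, kof mu == k & (m <= N.+1)%N])
       Wt (fun j => a j.+1) 1 mu.
Proof.
move=> m0.
rewrite (eq_bigr (fun t : m.-tuple 'I_k.+1 => wL N.+1 alpha a (map val t))); last by move=> t _; apply: term_eq.
pose good (t : m.-tuple 'I_k.+1) := all (fun x => x <= alpha)%N (map val t) && (m <= N.+1)%N.
transitivity (\sum_(t : m.-tuple 'I_k.+1 | is_partition k (map val t) && good t)
                 wL N.+1 alpha a (map val t)).
  rewrite [LHS]big_mkcond [RHS]big_mkcond; apply: eq_bigr => t _.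
  case: (is_partition k _) => //=.
  case g: (good t) => //.
  move/negbT: g; rewrite negb_and => /orP [/allPn [x xin xa] | mN].
    by rewrite /wL (big_rem x) //= /bfun (negbTE xa) andbF mul0r !mulr0.
  by rewrite /wL size_map size_tuple ffact_small ?mul0r ?mulr0 // ltnNge.
pose h (mu : alpha.-tuple 'I_N.+2) : m.-tuple 'I_k.+1 :=
  [tuple inord (nth 0%N (Lof (gof mu) alpha) i) | i < m].
pose h' (t : m.-tuple 'I_k.+1) : alpha.-tuple 'I_N.+2 :=
  [tuple inord (count_mem j.+1 (map val t)) | j < alpha].
have gof_h' t j : (j < alpha)%N -> (m <= N.+1)%N ->
    gof (h' t) j = count_mem j.+1 (map val t).
  move=> ja mN; rewrite -[j]/(val (Ordinal ja)) gof_tnth tnth_mktuple inordK //.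
  apply: leq_ltn_trans (count_size _ _) _; rewrite size_map size_tuple ltnS //.
have map_val_h mu : sz mu = m -> kof mu = k -> map val (h mu) = Lof (gof mu) alpha.
  move=> szm kofk; apply: map_val_mktuple_inord; first by rewrite size_Lof.
  apply/allP => x xin; rewrite -kofk /kof -sumn_Lof; exact: mem_le_sumn.
rewrite (reindex_onto h h') /=; last first.
  move=> t /andP [pt /andP [gt mN]].
  have E : Lof (gof (h' t)) alpha = map val t.
    case/and3P: pt => st pos _.
    apply: Lof_count => //.
      apply/allP => x xin; rewrite (allP pos x xin) /=; exact: (allP gt x xin).
    by move=> j ja; apply: gof_h'.
  apply: eq_from_tnth => i; rewrite tnth_mktuple E.
  rewrite (nth_map ord0) ?size_tuple // -(tnth_nth ord0); exact: inord_val.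
have cond_eq : forall mu, (is_partition k (map val (h mu)) && good (h mu)) && (h' (h mu) == mu)
    = [&& sz mu == m, kof mu == k & (m <= N.+1)%N].
  move=> mu; apply/idP/idP.
    case/andP => [/andP [pt /andP [gd mN]] /eqP eqmu].
    have E : Lof (gof mu) alpha = map val (h mu).
      case/and3P: pt => st pos _.
      apply: Lof_count => //.
        apply/allP => x xin; rewrite (allP pos x xin) /=; exact: (allP gd x xin).
      by move=> j ja; have := gof_h' (h mu) j ja mN; rewrite eqmu.
    case/and3P: pt => _ _ /eqP sk.
    rewrite mN andbT; apply/andP; split.
      by rewrite /sz -size_Lof E size_map size_tuple.
    by rewrite /kof -sumn_Lof E sk.
  case/and3P => /eqP szm /eqP kofk mN.
  rewrite map_val_h //.
  apply/andP; split.
    apply/andP; split.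
      apply/and3P; split; first exact: sorted_Lof.
        by apply/allP => x /mem_Lof /andP [].
      by rewrite sumn_Lof -kofk.
    rewrite /good map_val_h // mN andbT; apply/allP => x /mem_Lof /andP [] //.
  apply/eqP/eq_from_tnth => j; rewrite tnth_mktuple; apply: val_inj => /=.
  rewrite map_val_h // count_Lof // gof_tnth inordK //.
apply: eq_big => [mu|mu]; first exact: cond_eq.
rewrite cond_eq => /and3P [/eqP szm /eqP kofk mN].
rewrite map_val_h // /wL Cstb_Lof size_Lof prod_Lof /Wt expr1n mulr1.
have -> : \prod_(j < alpha) bfun alpha a j.+1 ^+ gof mu j = \prod_(j < alpha) a j.+1 ^+ gof mu j.
  by apply: eq_bigr => j _; rewrite /bfun /= ltn_ord.
by rewrite mulrCA mulrA.
Qed.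

Definition mu0 alpha N : alpha.-tuple 'I_N.+1 := [tuple of nseq alpha ord0].

Lemma gof_mu0 alpha N j : gof (mu0 alpha N) j = 0%N.
Proof. by rewrite /gof /= map_nseq nth_nseq; case: ifP. Qed.

Lemma sz_eq0 alpha N (mu : alpha.-tuple 'I_N.+1) : (sz mu == 0%N) = (mu == mu0 alpha N).
Proof.
apply/eqP/eqP => [H|->]; last by rewrite /sz big1 // => j _; rewrite gof_mu0.
apply: eq_from_tnth => j; apply: val_inj.
change (nat_of_ord (tnth mu j) = nat_of_ord (tnth (mu0 alpha N) j)).
rewrite -!gof_tnth gof_mu0.
by move/eqP: H; rewrite /sz sum_nat_eq0 => /forallP /(_ j) /eqP.
Qed.

Lemma sz_le_kof n N (mu : n.-tuple 'I_N.+1) : (sz mu <= kof mu)%N.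
Proof. by rewrite /sz /kof; apply: leq_sum => j _; apply: leq_pmulr. Qed.

Lemma kof_le n N (mu : n.-tuple 'I_N.+1) : (kof mu <= n * sz mu)%N.
Proof.
rewrite /kof /sz big_distrr /=; apply: leq_sum => j _.
by rewrite mulnC leq_mul2r ltn_ord orbT.
Qed.

Lemma main_gen (C : numFieldType) (N alpha : nat) (a : nat -> C) :
  (1 + \sum_(1 <= j < alpha.+1) a j) ^+ N =
  1 + \sum_(1 <= k < (alpha * N).+1)
        \sum_(1 <= m < k.+1)
          \sum_(t : m.-tuple 'I_k.+1 | is_partition k (map val t))
            ((Cstb (map val t))%:R)^-1 *
            \sum_(s : 'S_m)
              (-1) ^+ odd_perm s *
              Aop N (anj N alpha a) s [tuple of map val t].
Proof.
case: N => [|N].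
  by rewrite expr0 muln0 big_geq // addr0.
rewrite [in LHS]big_add1 /= big_mkord (multinomial N.+1 alpha (fun j => a j.+1) 1).
rewrite (bigD1 (mu0 alpha N.+1)) //=.
have -> : Wt (fun j => a j.+1) 1 (mu0 alpha N.+1) = 1.
  rewrite /Wt /sz big1 => [|j _]; last exact: gof_mu0.
  rewrite ffactn0 expr1n mulr1 big1 => [|j _]; last by rewrite gof_mu0.
  rewrite big1 => [|j _]; last by rewrite gof_mu0 expr0.
  by rewrite divr1 mulr1.
congr (_ + _).
transitivity (\sum_(mu : alpha.-tuple 'I_N.+2 | (0 < sz mu <= N.+1)%N)
                Wt (fun j => a j.+1) 1 mu).
  rewrite big_mkcond [RHS]big_mkcond; apply: eq_bigr => mu _.
  rewrite -sz_eq0 lt0n; case: (sz mu == 0%N) => //=.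
  case: leqP => // hs.
  by rewrite /Wt ffact_small // !mul0r.
have kof_lt (mu : alpha.-tuple 'I_N.+2) : (sz mu <= N.+1)%N -> (kof mu < (alpha * N.+1).+1)%N.
  move=> sN; rewrite ltnS; apply: leq_trans (kof_le mu) _.
  by rewrite leq_mul2l sN orbT.
rewrite (partition_big (fun mu : alpha.-tuple 'I_N.+2 => (inord (kof mu) : 'I_(alpha * N.+1).+1))
           (fun k => 0 < k)%N); last first.
  move=> mu /andP [s0 sN]; rewrite inordK; last exact: kof_lt.
  exact: leq_trans s0 (sz_le_kof mu).
rewrite big_geq_mkord /=.
apply: eq_big => // k k0.
rewrite (eq_bigl (fun mu => (0 < sz mu <= N.+1)%N && (kof mu == k))); last first.
  move=> mu; case hs: (0 < sz mu <= N.+1)%N => //=.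
  by rewrite -val_eqE /= inordK //; apply: kof_lt; case/andP: hs.
rewrite (partition_big (fun mu : alpha.-tuple 'I_N.+2 => (inord (sz mu) : 'I_k.+1))
           (fun m => 0 < m)%N); last first.
  move=> mu /andP [/andP [s0 _] /eqP kk]; rewrite inordK // ltnS -kk; exact: sz_le_kof.
rewrite big_geq_mkord /=.
apply: eq_big => // m m0.
rewrite match_km //.
apply: eq_bigl => mu.
case hk: (kof mu == k); rewrite ?andbF ?andbT //=.
have szk : (sz mu < k.+1)%N by rewrite ltnS -(eqP hk) sz_le_kof.
rewrite -val_eqE /= inordK //.
case hm: (sz mu == m); rewrite ?andbF ?andbT //=.
by rewrite (eqP hm) m0.
Qed.

End Helpers.

Local Open Scope complex_scope.

Theorem mainTheorem4 (R : realType) (N alpha : nat) (a : nat -> R[i]) :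
  (1 + \sum_(1 <= j < alpha.+1) a j) ^+ N =
  1 + \sum_(1 <= k < (alpha * N).+1)
        \sum_(1 <= m < k.+1)
          \sum_(t : m.-tuple 'I_k.+1 | is_partition k (map val t))
            ((Cstb (map val t))%:R)^-1 *
            \sum_(s : 'S_m)
              (-1) ^+ odd_perm s *
              Aop N (anj N alpha a) s [tuple of map val t].
Proof. exact: Helpers.main_gen. Qed.
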